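(* Let $\varphi$ be an $\mathrm{LTL_{PSL}}$ formula, $D=(I^+,I^-)$ a partition of the set $I$ of its subformulae of the form $s\preceq s'$, and $\varphi_D$ the associated formula. If $\varphi_D$ is $\mathrm{SLTL}$-satisfiable, then the language of the generalised Büchi automaton $\mathcal{A}_{\varphi_D}$ is non-empty.
   Context: Propositional variables $\mathcal{P}$ and standpoint symbols $\mathcal{S}$ (with universal symbol $*$) are countably infinite. SLTL formulae: $\varphi ::= p \mid s \preceq s' \mid \neg\varphi \mid \varphi\wedge\varphi \mid \Diamond_s\varphi \mid \Box_s\varphi \mid X\varphi \mid \varphi\,U\,\varphi$. A model is $M=(\Pi,\lambda)$ with $\Pi\neq\emptyset$ a set of traces $\sigma:\mathbb{N}\to 2^{\mathcal{P}}$, $\lambda:\mathcal{S}\to 2^{\Pi}\setminus\{\emptyset\}$, $\lambda( * )=\Pi$; $M,\sigma,i\models p$ iff $p\in\sigma(i)$; $s\preceq s'$ holds iff $\lambda(s)\subseteq\lambda(s')$; $\Diamond_s\psi$ (resp. $\Box_s\psi$) holds at $\sigma,i$ iff $\psi$ holds at $\sigma',i$ for some (resp. all) $\sigma'\in\lambda(s)$; $X\psi$ holds at $\sigma,i$ iff $\psi$ holds at $\sigma,i+1$; $\psi U\chi$ holds at $\sigma,i$ iff $\chi$ holds at some $\sigma,i'$, $i'\ge i$, and $\psi$ at $\sigma,i''$ for all $i\le i''<i'$. $G\psi:=\neg(\top U\neg\psi)$. Satisfiable: holds at $\sigma,0$ for some $M$, $\sigma\in\Pi$. $\mathrm{LTL_{PSL}}$: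 SLTL formulae with no $X$ or $U$ in the scope of any $\Diamond_s$ or $\Box_s$. $\varphi_D:=\varphi[I^+\mapsto\top,I^-\mapsto\bot]\wedge G\big(\bigwedge_{(s\preceq s')\in I^+}(s\preceq s')\wedge\bigwedge_{(s\preceq s')\in I^-}(\Diamond_s p_{s,s'}\wedge\neg\Diamond_{s'}p_{s,s'})\big)$, where members of $I^+$ (resp. $I^-$) are replaced by $\top$ (resp. $\bot$) and the $p_{s,s'}$ are fresh variables. PSL (propositional standpoint logic) is the temporal-free fragment; a PSL model is $(\Pi,V)$ with $\Pi$ finite nonempty, $V:\mathcal{S}\cup\mathcal{P}\to 2^{\Pi}$, $V(s)\neq\emptyset$ for all $s$, $V( * )=\Pi$; $\pi\models p$ iff $\pi\in V(p)$, $s\preceq s'$ iff $V(s)\subseteq V(s')$, $\Diamond_s\psi$/$\Box_s\psi$ iff $\psi$ holds at some/all $\pi'\in V(s)$. The closure $cl(\varphi_D)$ is the smallest set containing all subformulae of $\varphi_D$, $\top$ and $\bot$, closed under negation (identifying $\neg\neg\psi$ with $\psi$), and such that $\psi U\psi'\in cl(\varphi_D)$ implies $X(\psi U\psi')\in cl(\varphi_D)$. $B\subseteq cl(\varphi_D)$ is maximally consistent if $\top\in B$, $\bot\notin B$; $\psi\in B$ iff $\neg\psi\notin B$ for $\neg\psi\in cl(\varphi_D)$; $\psi_1\wedge\psi_2\in B$ iff $\psi_1,\psi_2\in B$; $\psi_1U\psi_2\in B$ iff $\psi_2\in B$ or $\{\psi_1,X(\psi_1U\psi_2)\}\subseteq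 B$. $B$ is standpoint-consistent if the conjunction of the members of $B$ that are PSL formulae is PSL-satisfiable; $B$ is s-elementary if maximally consistent and standpoint-consistent. $\mathcal{A}_{\varphi_D}=(Q,2^{\mathcal{P}(\varphi_D)},\delta,Q_0,\mathcal{F})$ where $\mathcal{P}(\varphi_D)$ is the set of variables of $\varphi_D$; $Q$ is the set of s-elementary sets; $Q_0=\{B\in Q:\varphi_D\in B\}$; $\mathcal{F}$ contains, for each $\psi_1U\psi_2\in cl(\varphi_D)$, the set $\{B\in Q:\psi_1U\psi_2\notin B\text{ or }\psi_2\in B\}$; $\delta(B,A)=\emptyset$ if $A\neq B\cap\mathcal{P}(\varphi_D)$, and otherwise $\delta(B,A)$ is the set of $B'\in Q$ such that for every $X\psi\in cl(\varphi_D)$, $X\psi\in B$ iff $\psi\in B'$. An infinite word is accepted if it has a run starting in $Q_0$ that visits each set of $\mathcal{F}$ infinitely often. *)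

(* Defs.v *)
From Stdlib Require List.
From mathcomp Require Import all_boot.
Set Implicit Arguments. Unset Strict Implicit. Unset Printing Implicit Defensive.

(* Propositional variables and standpoint symbols are both [nat]
   (countably infinite); standpoint symbol [0] is the universal standpoint [*]. *)
Definition univ_sp : nat := 0.

(* SLTL syntax.  [FTop] is the constant ⊤ (used by φ_D and by the closure);
   ⊥ is [FNeg FTop]. *)
Inductive form : Type :=
| FTop
| FVar (p : nat)
| FPrec (s s' : nat)
| FNeg (f : form)
| FAnd (f g : form)
| FDia (s : nat) (f : form)
| FBox (s : nat) (f : form)
| FNext (f : form)
| FUntil (f g : form).

Definition FBot : form := FNeg FTop.
Definition FG (f : form) : form := FNeg (FUntil FTop (FNeg f)).

(* φ is built from the grammar (no ⊤ constant) *)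
Fixpoint no_top (f : form) : Prop :=
  match f with
  | FTop => False
  | FVar _ | FPrec _ _ => True
  | FNeg g | FDia _ g | FBox _ g | FNext g => no_top g
  | FAnd g h | FUntil g h => no_top g /\ no_top h
  end.

Definition trace := nat -> nat -> bool.   (* σ i p  <->  p ∈ σ(i) *)

Record model := Model { Pi : trace -> Prop; lam : nat -> trace -> Prop }.

Definition wf_model (M : model) : Prop :=
  (exists σ, Pi M σ) /\
  (forall s, exists σ, lam M s σ) /\
  (forall s σ, lam M s σ -> Pi M σ) /\
  (forall σ, lam M univ_sp σ <-> Pi M σ).

Fixpoint sat (M : model) (σ : trace) (i : nat) (f : form) : Prop :=
  match f with
  | FTop => True
  | FVar p => σ i p = true
  | FPrec s s' => forall τ, lam M s τ -> lam M s' τ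
  | FNeg g => ~ sat M σ i g
  | FAnd g h => sat M σ i g /\ sat M σ i h
  | FDia s g => exists τ, lam M s τ /\ sat M τ i g
  | FBox s g => forall τ, lam M s τ -> sat M τ i g
  | FNext g => sat M σ i.+1 g
  | FUntil g h => exists j, i <= j /\ sat M σ j h /\
                    forall k, i <= k -> k < j -> sat M σ k g
  end.

Definition SLTL_satisfiable (f : form) : Prop :=
  exists M σ, wf_model M /\ Pi M σ /\ sat M σ 0 f.

Fixpoint temporal_free (f : form) : Prop :=
  match f with
  | FTop | FVar _ | FPrec _ _ => True
  | FNeg g | FDia _ g | FBox _ g => temporal_free g
  | FAnd g h => temporal_free g /\ temporal_free h
  | FNext _ | FUntil _ _ => False
  end.

Fixpoint ltl_psl (f : form) : Prop :=
  match f with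
  | FTop | FVar _ | FPrec _ _ => True
  | FDia _ g | FBox _ g => temporal_free g
  | FNeg g | FNext g => ltl_psl g
  | FAnd g h | FUntil g h => ltl_psl g /\ ltl_psl h
  end.

Fixpoint subforms (f : form) : list form :=
  f :: match f with
       | FTop | FVar _ | FPrec _ _ => [::]
       | FNeg g | FDia _ g | FBox _ g | FNext g => subforms g
       | FAnd g h | FUntil g h => subforms g ++ subforms h
       end.

Fixpoint vars (f : form) : list nat :=
  match f with
  | FTop | FPrec _ _ => [::]
  | FVar p => [:: p]
  | FNeg g | FDia _ g | FBox _ g | FNext g => vars g
  | FAnd g h | FUntil g h => vars g ++ vars h
  end.

Fixpoint prec_pairs (f : form) : list (nat * nat) :=
  match f with
  | FPrec s s' => [:: (s, s')]
  | FTop | FVar _ => [::]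
  | FNeg g | FDia _ g | FBox _ g | FNext g => prec_pairs g
  | FAnd g h | FUntil g h => prec_pairs g ++ prec_pairs h
  end.

Fixpoint bigAnd (l : list form) : form :=
  match l with
  | [::] => FTop
  | [:: x] => x
  | x :: l' => FAnd x (bigAnd l')
  end.

(* ---------- φ_D ----------
   The partition D = (I+, I-) of I is given by d : nat*nat -> bool:
   I+ = {(s,s') ∈ I | d (s,s')},  I- = {(s,s') ∈ I | ~~ d (s,s')}.
   fresh s s' is the fresh variable p_{s,s'}. *)
Fixpoint replD (d : nat * nat -> bool) (f : form) : form :=
  match f with
  | FPrec s s' => if d (s, s') then FTop else FBot
  | FTop => FTop
  | FVar p => FVar p
  | FNeg g => FNeg (replD d g)
  | FAnd g h => FAnd (replD d g) (replD d h)
  | FDia s g => FDia s (replD d g)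
  | FBox s g => FBox s (replD d g)
  | FNext g => FNext (replD d g)
  | FUntil g h => FUntil (replD d g) (replD d h)
  end.

Definition Iplus (d : nat * nat -> bool) (f : form) : list (nat * nat) :=
  filter d (prec_pairs f).
Definition Iminus (d : nat * nat -> bool) (f : form) : list (nat * nat) :=
  filter (fun st => ~~ d st) (prec_pairs f).

Definition phiD (f : form) (d : nat * nat -> bool) (fresh : nat -> nat -> nat) : form :=
  FAnd (replD d f)
    (FG (bigAnd
       (map (fun st => FPrec st.1 st.2) (Iplus d f) ++
        map (fun st => FAnd (FDia st.1 (FVar (fresh st.1 st.2)))
                            (FNeg (FDia st.2 (FVar (fresh st.1 st.2)))))
            (Iminus d f)))).

Definition fresh_ok (f : form) (d : nat * nat -> bool) (fresh : nat -> nat -> nat) : Prop :=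
  forall st, List.In st (Iminus d f) ->
    ~ List.In (fresh st.1 st.2) (vars f) /\
    forall st', List.In st' (Iminus d f) ->
      fresh st.1 st.2 = fresh st'.1 st'.2 -> st = st'.

Fixpoint nnorm (f : form) : form :=
  match f with
  | FTop => FTop
  | FVar p => FVar p
  | FPrec s s' => FPrec s s'
  | FNeg g => match nnorm g with FNeg h => h | g' => FNeg g' end
  | FAnd g h => FAnd (nnorm g) (nnorm h)
  | FDia s g => FDia s (nnorm g)
  | FBox s g => FBox s (nnorm g)
  | FNext g => FNext (nnorm g)
  | FUntil g h => FUntil (nnorm g) (nnorm h)
  end.

Definition negn (f : form) : form :=
  match f with FNeg g => g | _ => FNeg f end.

Definition cl_base (f g : form) : Prop :=
  List.In g (subforms f) \/ g = FTop \/ g = FBot \/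
  exists a b, List.In (FUntil a b) (subforms f) /\ g = FNext (FUntil a b).

(* cl(f), formulae taken up to identification of ¬¬ψ with ψ *)
Definition in_cl (f g : form) : Prop :=
  exists h, cl_base f h /\ (g = nnorm h \/ g = negn (nnorm h)).

Definition fset := form -> Prop.   (* subsets of cl(f) *)

Definition max_consistent (f : form) (B : fset) : Prop :=
  (forall g, B g -> in_cl f g) /\
  B FTop /\ ~ B FBot /\
  (forall g, in_cl f g -> (B g <-> ~ B (negn g))) /\
  (forall a b, in_cl f (FAnd a b) -> (B (FAnd a b) <-> B a /\ B b)) /\
  (forall a b, in_cl f (FUntil a b) ->
     (B (FUntil a b) <-> B b \/ (B a /\ B (FNext (FUntil a b))))).

(* PSL semantics on a finite set of points T, with V split into
   Vs (standpoints) and Vp (variables) *)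
Fixpoint psl_sat (T : finType) (Vs : nat -> T -> Prop) (Vp : nat -> T -> Prop)
    (x : T) (f : form) : Prop :=
  match f with
  | FTop => True
  | FVar p => Vp p x
  | FPrec s s' => forall y, Vs s y -> Vs s' y
  | FNeg g => ~ psl_sat Vs Vp x g
  | FAnd g h => psl_sat Vs Vp x g /\ psl_sat Vs Vp x h
  | FDia s g => exists y, Vs s y /\ psl_sat Vs Vp y g
  | FBox s g => forall y, Vs s y -> psl_sat Vs Vp y g
  | FNext _ | FUntil _ _ => False   (* not PSL formulae; never used *)
  end.

Definition psl_model (T : finType) (Vs : nat -> T -> Prop) : Prop :=
  (forall s, exists y, Vs s y) /\ (forall y, Vs univ_sp y).

Definition standpoint_consistent (B : fset) : Prop :=
  exists (T : finType) (Vs : nat -> T -> Prop) (Vp : nat -> T -> Prop) (x : T),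
    psl_model Vs /\ forall g, B g -> temporal_free g -> psl_sat Vs Vp x g.

Definition s_elementary (f : form) (B : fset) : Prop :=
  max_consistent f B /\ standpoint_consistent B.

Definition letter := nat -> bool.   (* A ⊆ P(f) *)

Definition aut_init (f : form) (B : fset) : Prop :=
  s_elementary f B /\ B (nnorm f).

Definition aut_delta (f : form) (B : fset) (A : letter) (B' : fset) : Prop :=
  (forall p, A p -> List.In p (vars f)) /\
  (forall p, List.In p (vars f) -> (A p <-> B (FVar p))) /\
  s_elementary f B' /\
  (forall g, in_cl f (FNext g) -> (B (FNext g) <-> B' g)).

Definition aut_accepts_run (f : form) (w : nat -> letter) (rho : nat -> fset) : Prop :=
  aut_init f (rho 0) /\
  (forall i, aut_delta f (rho i) (w i) (rho i.+1)) /\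
  (forall a b, in_cl f (FUntil a b) ->
     forall n, exists m, n <= m /\ (~ rho m (FUntil a b) \/ rho m b)).

Definition aut_lang_nonempty (f : form) : Prop :=
  exists (w : nat -> letter) (rho : nat -> fset),
    (forall i p, w i p -> List.In p (vars f)) /\ aut_accepts_run f w rho.

(* Main.v *)
Require Import Defs.
From mathcomp Require Import all_boot zify.
From Stdlib Require Import Classical ClassicalEpsilon.
Import Defs.

Lemma In_cat {A : Type} (x : A) (s1 s2 : seq A) :
  List.In x (s1 ++ s2) <-> List.In x s1 \/ List.In x s2.
Proof. induction s1 as [|a s1 IH]; simpl; [tauto|rewrite IH; tauto]. Qed.

Lemma In_map' {A B : Type} (f : A -> B) x s : List.In x s -> List.In (f x) (map f s).
Proof. induction s as [|a s IH]; simpl; [tauto| intros [->|H]; auto]. Qed.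

Lemma sub_refl g : List.In g (subforms g).
Proof. destruct g; simpl; auto. Qed.

Lemma sub_trans a b c : List.In b (subforms a) -> List.In c (subforms b) -> List.In c (subforms a).
Proof.
  induction a; intros H1 H2; simpl in H1; destruct H1 as [<-|H1]; try exact H2;
  try contradiction; simpl; right;
  repeat match goal with
  | H : List.In _ (_ ++ _) |- _ => apply In_cat in H; destruct H
  end; try (apply In_cat); eauto.
Qed.

Definition not_neg (f : form) : Prop := match f with FNeg _ => False | _ => True end.

Lemma nnorm_FNeg g : nnorm (FNeg g) = negn (nnorm g).
Proof. simpl. destruct (nnorm g); reflexivity. Qed.

Lemma nnorm_neg h : forall y, nnorm h = FNeg y -> not_neg y.
Proof.
  induction h; simpl; try discriminate.
  intros y H; destruct (nnorm h) eqn:E; try (injection H as <-; exact I).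
  subst. specialize (IHh _ erefl). simpl in IHh. contradiction.
Qed.

Lemma negn_negn_nnorm h : negn (negn (nnorm h)) = nnorm h.
Proof.
  destruct (nnorm h) eqn:E; try reflexivity.
  simpl. pose proof (nnorm_neg h f E). destruct f; simpl in *; try reflexivity; contradiction.
Qed.

Lemma sub_negn x c : List.In c (subforms (negn x)) -> negn x = c \/ List.In c (subforms x).
Proof. destruct x; simpl; tauto. Qed.

Lemma negn_sub x : List.In (negn x) (subforms (FNeg x)).
Proof. destruct x; simpl; auto. right; right; apply sub_refl. Qed.

Ltac lift_in := simpl; right; repeat (apply In_cat; first [left; assumption | right]); try assumption.

Lemma SUB h : forall c, List.In c (subforms (nnorm h)) -> exists h', List.In h' (subforms h) /\ nnorm h' = c.
Proof.
  induction h; intros c Hc.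
  - simpl in Hc. destruct Hc as [<-|[]]. exists FTop; simpl; auto.
  - simpl in Hc. destruct Hc as [<-|[]]. exists (FVar p); simpl; auto.
  - simpl in Hc. destruct Hc as [<-|[]]. exists (FPrec s s'); simpl; auto.
  - rewrite nnorm_FNeg in Hc. apply sub_negn in Hc. destruct Hc as [<-|Hc].
    + exists (FNeg h); split; [apply sub_refl| apply nnorm_FNeg].
    + destruct (IHh c Hc) as [h' [H1 H2]]. exists h'; split; [simpl; right; exact H1 | exact H2].
  - simpl in Hc. destruct Hc as [Hc|Hc]. exists (FAnd h1 h2); split; [apply sub_refl|exact Hc].
    apply In_cat in Hc; destruct Hc as [Hc|Hc];
    [destruct (IHh1 c Hc) as [h' [H1 H2]] | destruct (IHh2 c Hc) as [h' [H1 H2]]];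
    exists h'; split; auto; simpl; right; apply In_cat; auto.
  - simpl in Hc. destruct Hc as [Hc|Hc]. exists (FDia s h); split; [apply sub_refl|exact Hc].
    destruct (IHh c Hc) as [h' [H1 H2]]. exists h'; split; [simpl; right; exact H1 | exact H2].
  - simpl in Hc. destruct Hc as [Hc|Hc]. exists (FBox s h); split; [apply sub_refl|exact Hc].
    destruct (IHh c Hc) as [h' [H1 H2]]. exists h'; split; [simpl; right; exact H1 | exact H2].
  - simpl in Hc. destruct Hc as [Hc|Hc]. exists (FNext h); split; [apply sub_refl|exact Hc].
    destruct (IHh c Hc) as [h' [H1 H2]]. exists h'; split; [simpl; right; exact H1 | exact H2].
  - simpl in Hc. destruct Hc as [Hc|Hc]. exists (FUntil h1 h2); split; [apply sub_refl|exact Hc].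
    apply In_cat in Hc; destruct Hc as [Hc|Hc];
    [destruct (IHh1 c Hc) as [h' [H1 H2]] | destruct (IHh2 c Hc) as [h' [H1 H2]]];
    exists h'; split; auto; simpl; right; apply In_cat; auto.
Qed.

Lemma base_sub f h h' : cl_base f h -> List.In h' (subforms h) -> cl_base f h'.
Proof.
  intros [Hb|[-> | [-> | [a [b [Hab ->]]]]]] Hs.
  - left. eapply sub_trans; eauto.
  - simpl in Hs. destruct Hs as [<-|[]]. right; left; auto.
  - simpl in Hs. destruct Hs as [<-|[<-|[]]]. right; right; left; auto. right; left; auto.
  - simpl in Hs. destruct Hs as [<-|Hs]. right; right; right; eauto.
    left. eapply sub_trans; eauto.
Qed.

Lemma CL f g c : in_cl f g -> List.In c (subforms g) -> in_cl f c.
Proof.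
  intros [h [Hb [-> | ->]]] Hc.
  - destruct (SUB h c Hc) as [h' [H1 H2]]. exists h'; split; [eapply base_sub; eauto| left; auto].
  - apply sub_negn in Hc. destruct Hc as [<-|Hc].
    + exists h; split; auto.
    + destruct (SUB h c Hc) as [h' [H1 H2]]. exists h'; split; [eapply base_sub; eauto| left; auto].
Qed.

Lemma untilU h a b : nnorm h = FUntil a b \/ nnorm h = FNeg (FUntil a b) ->
  exists x y, List.In (FUntil x y) (subforms h) /\ nnorm x = a /\ nnorm y = b.
Proof.
  induction h; simpl; try (intros [H|H]; discriminate).
  - intros H. destruct (nnorm h) eqn:E; destruct H as [H|H]; try discriminate.
    + subst. destruct (IHh (or_intror erefl)) as [x [y [H1 H2]]]; exists x, y; split; [right; exact H1| exact H2].
    + subst. pose proof (nnorm_neg h _ E). simpl in *. contradiction.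
    + injection H as -> ->. destruct (IHh (or_introl erefl)) as [x [y [H1 H2]]]; exists x, y; split; [right; exact H1| exact H2].
  - intros HH. destruct HH as [HH|HH]; [|discriminate]. injection HH as H1 H2. exists h1, h2; split; auto.
Qed.

Lemma in_cl_next_until f a b : in_cl f (FUntil a b) -> in_cl f (FNext (FUntil a b)).
Proof.
  intros [h [Hb Hg]].
  assert (Hn : nnorm h = FUntil a b \/ nnorm h = FNeg (FUntil a b)).
  { destruct Hg as [Hg|Hg]; [left; auto|right]. destruct (nnorm h); simpl in Hg; try discriminate; subst; auto. }
  destruct (untilU h a b Hn) as [x [y [H1 [H2 H3]]]].
  pose proof (base_sub f h _ Hb H1) as Hb'.
  destruct Hb' as [Hb'|[Hb'|[Hb'|[a' [b' [_ Hb']]]]]]; try discriminate.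
  exists (FNext (FUntil x y)); split.
  - right; right; right; eauto.
  - left; simpl; rewrite H2 H3; auto.
Qed.

Lemma in_cl_negn f g : in_cl f g -> in_cl f (negn g).
Proof.
  intros [h [Hb [-> | ->]]]; exists h; split; auto. left; apply negn_negn_nnorm.
Qed.

Lemma in_cl_top f : in_cl f FTop.
Proof. exists FTop; split; [right; left; auto| left; auto]. Qed.

Lemma vars_sub f p : List.In p (vars f) -> List.In (FVar p) (subforms f).
Proof.
  induction f; simpl; try tauto; intros H;
  repeat match goal with
  | H : List.In _ (_ ++ _) |- _ => apply In_cat in H; destruct H
  end; try (right; apply In_cat); auto.
  destruct H as [->|[]]; auto.
Qed.

Lemma sat_negn M σ i g : sat M σ i (negn g) <-> ~ sat M σ i g.
Proof. destruct g; simpl; try tauto. Qed.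

Lemma sat_nnorm M g : forall σ i, sat M σ i (nnorm g) <-> sat M σ i g.
Proof.
  induction g; intros σ i; try tauto.
  - rewrite nnorm_FNeg. pose proof (sat_negn M σ i (nnorm g)). pose proof (IHg σ i).
    change (sat M σ i (negn (nnorm g)) <-> ~ sat M σ i g). tauto.
  - simpl; specialize (IHg1 σ i); specialize (IHg2 σ i); tauto.
  - simpl; split; intros [t [H1 H2]]; exists t; split; auto; apply IHg; auto.
  - simpl; split; intros H t Ht; apply IHg; auto.
  - simpl; apply IHg.
  - simpl; split; intros [j [Hj [Hb Ha]]]; exists j; (split; [exact Hj|]); split;
      try (apply IHg2; exact Hb); intros k H1 H2; apply IHg1; auto.
Qed.

Lemma sat_until M σ i a b :
  sat M σ i (FUntil a b) <-> sat M σ i b \/ (sat M σ i a /\ sat M σ i (FNext (FUntil a b))).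
Proof.
  simpl; split.
  - intros [j [Hj [Hb Ha]]].
    destruct (eqVneq j i) as [Heq|Hne].
    + subst j. left; exact Hb.
    + right. split.
      * apply Ha; lia.
      * exists j. split; [lia|]. split; [exact Hb|]. intros k H1 H2; apply Ha; lia.
  - intros [Hb|[Ha [j [Hj [Hb Hk]]]]].
    + exists i. split; [lia|]. split; [exact Hb|]. intros k H1 H2; lia.
    + exists j. split; [lia|]. split; [exact Hb|]. intros k H1 H2.
      destruct (eqVneq k i) as [Heq|Hne]; [subst k; exact Ha| apply Hk; lia].
Qed.

Definition inh_tr : inhabited trace := inhabits (fun _ _ => false).
Definition wdia M i s g := epsilon inh_tr (fun t => lam M s t /\ (sat M t i g \/ ~ exists t', lam M s t' /\ sat M t' i g)).
Definition wbox M i s g := epsilon inh_tr (fun t => lam M s t /\ (~ sat M t i g \/ forall t', lam M s t' -> sat M t' i g)).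
Definition wprec M s s' := epsilon inh_tr (fun t => lam M s t /\ (~ lam M s' t \/ forall t', lam M s t' -> lam M s' t')).
Definition wany M s := epsilon inh_tr (fun t => lam M s t).

Lemma wdia_spec M i s g : (exists t, lam M s t) ->
  lam M s (wdia M i s g) /\ (sat M (wdia M i s g) i g \/ ~ exists t', lam M s t' /\ sat M t' i g).
Proof.
  intros [t0 H0]. unfold wdia. apply epsilon_spec.
  destruct (classic (exists t', lam M s t' /\ sat M t' i g)) as [[t [H1 H2]]|Hn]; [exists t | exists t0]; auto.
Qed.
Lemma wbox_spec M i s g : (exists t, lam M s t) ->
  lam M s (wbox M i s g) /\ (~ sat M (wbox M i s g) i g \/ forall t', lam M s t' -> sat M t' i g).
Proof.
  intros [t0 H0]. unfold wbox. apply epsilon_spec.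
  destruct (classic (forall t', lam M s t' -> sat M t' i g)) as [Ha|Hn]; [exists t0; auto|].
  apply not_all_ex_not in Hn. destruct Hn as [t Ht]. exists t.
  destruct (classic (lam M s t)); [|tauto]. split; auto.
Qed.
Lemma wprec_spec M s s' : (exists t, lam M s t) ->
  lam M s (wprec M s s') /\ (~ lam M s' (wprec M s s') \/ forall t', lam M s t' -> lam M s' t').
Proof.
  intros [t0 H0]. unfold wprec. apply epsilon_spec.
  destruct (classic (forall t', lam M s t' -> lam M s' t')) as [Ha|Hn]; [exists t0; auto|].
  apply not_all_ex_not in Hn. destruct Hn as [t Ht]. exists t.
  destruct (classic (lam M s t)); [|tauto]. split; auto.
Qed.
Lemma wany_spec M s : (exists t, lam M s t) -> lam M s (wany M s).
Proof. intros H. unfold wany. apply epsilon_spec. exact H. Qed.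

Definition wits M i g : seq trace := match g with
 | FDia s a => [:: wdia M i s a] | FBox s a => [:: wbox M i s a]
 | FPrec s s' => [:: wprec M s s'; wany M s'] | _ => [::] end.
Definition sps g : seq nat := match g with
 | FDia s _ | FBox s _ => [:: s] | FPrec s s' => [:: s; s'] | _ => [::] end.
Fixpoint witl M i (l : seq form) : seq trace :=
  match l with [::] => [::] | g :: r => wits M i g ++ witl M i r end.
Fixpoint spl (l : seq form) : seq nat :=
  match l with [::] => [::] | g :: r => sps g ++ spl r end.

Lemma witl_in M i l g t : List.In g l -> List.In t (wits M i g) -> List.In t (witl M i l).
Proof.
  induction l as [|a l IH]; simpl; [tauto|]. intros [->|H] Ht; apply In_cat; auto.
Qed.
Lemma spl_in l g s : List.In g l -> List.In s (sps g) -> List.In s (spl l).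
Proof.
  induction l as [|a l IH]; simpl; [tauto|]. intros [->|H] Ht; apply In_cat; auto.
Qed.

Lemma lam_ne M s : wf_model M -> exists t, lam M s t.
Proof. intros [_ [H _]]; apply H. Qed.

Lemma witl_lam M i l t : wf_model M -> List.In t (witl M i l) -> exists s, lam M s t.
Proof.
  intros Hw. induction l as [|a l IH]; simpl; [tauto|]. intros H; apply In_cat in H.
  destruct H as [H|H]; [|auto].
  destruct a; simpl in H; try contradiction.
  - destruct H as [<-|[<-|[]]].
    + exists s; apply (wprec_spec M s s' (lam_ne M s Hw)).
    + exists s'; apply (wany_spec M s' (lam_ne M s' Hw)).
  - destruct H as [<-|[]]. exists s; apply (wdia_spec M i s a (lam_ne M s Hw)).
  - destruct H as [<-|[]]. exists s; apply (wbox_spec M i s a (lam_ne M s Hw)).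
Qed.

Lemma spl_wit M i l x : wf_model M -> List.In x (spl l) -> exists t, List.In t (witl M i l) /\ lam M x t.
Proof.
  intros Hw. induction l as [|a l IH]; simpl; [tauto|]. intros H; apply In_cat in H.
  destruct H as [H|H]; [|destruct (IH H) as [t [H1 H2]]; exists t; split; auto; apply In_cat; auto].
  destruct a; simpl in H; try contradiction.
  - destruct H as [H|[H|[]]]; subst x.
    + exists (wprec M s s'); split; [apply In_cat; simpl; auto|apply (wprec_spec M s s' (lam_ne M s Hw))].
    + exists (wany M s'); split; [apply In_cat; simpl; auto|apply (wany_spec M s' (lam_ne M s' Hw))].
  - destruct H as [H|[]]; subst x. exists (wdia M i s a); split; [apply In_cat; simpl; auto|apply (wdia_spec M i s a (lam_ne M s Hw))].
  - destruct H as [H|[]]; subst x. exists (wbox M i s a); split; [apply In_cat; simpl; auto|apply (wbox_spec M i s a (lam_ne M s Hw))].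
Qed.

Definition trk (σ : trace) (wl : seq trace) (k : 'I_(size wl).+1) : trace := nth σ (σ :: wl) k.
Definition Vsk M σ wl (MS : seq nat) s (k : 'I_(size wl).+1) : Prop :=
  lam M s (trk σ wl k) \/ ~ List.In s MS.
Definition Vpk i σ wl p (k : 'I_(size wl).+1) : Prop := trk σ wl k i p = true.

Lemma In_nth_ex {A : Type} (d : A) l x : List.In x l -> exists n, n < size l /\ nth d l n = x.
Proof.
  induction l as [|a l IH]; simpl; [tauto|]. intros [->|H].
  - exists 0; split; auto.
  - destruct (IH H) as [n [H1 H2]]. exists n.+1; split; auto.
Qed.

Lemma trk_idx σ wl t : List.In t wl -> exists k, trk σ wl k = t.
Proof.
  intros H; destruct (In_nth_ex σ _ _ H) as [n [Hn Hx]].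
  have Hn' : n.+1 < (size wl).+1 by rewrite ltnS.
  exists (Ordinal Hn'). exact Hx.
Qed.

Lemma nth_cases {A : Type} (d : A) l n : nth d l n = d \/ List.In (nth d l n) l.
Proof.
  revert n; induction l as [|a l IH]; intros n; simpl.
  - destruct n; auto.
  - destruct n; simpl; auto. destruct (IH n); auto.
Qed.

Lemma trk_Pi M σ i l k : wf_model M -> Pi M σ -> Pi M (trk σ (witl M i l) k).
Proof.
  intros Hw HP. unfold trk. destruct (nth_cases σ (σ :: witl M i l) k) as [->|H]; auto.
  simpl in H. destruct H as [<-|H]; auto.
  destruct (witl_lam M i l _ Hw H) as [s Hs]. destruct Hw as [_ [_ [H3 _]]]. eauto.
Qed.

Lemma psl_equiv M σ i (SL : seq form) :
  wf_model M ->
  (forall g c, List.In g SL -> List.In c (subforms g) -> List.In c SL) ->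
  forall g, temporal_free g -> List.In g SL ->
  forall k, psl_sat (Vsk M σ (witl M i SL) (spl SL)) (Vpk i σ (witl M i SL)) k g
            <-> sat M (trk σ (witl M i SL) k) i g.
Proof.
  intros Hw Hcl.
  assert (VsE : forall s k, List.In s (spl SL) ->
     (Vsk M σ (witl M i SL) (spl SL) s k <-> lam M s (trk σ (witl M i SL) k))).
  { intros s k Hs; unfold Vsk; tauto. }
  assert (Hsub : forall g c, List.In g SL -> List.In c (subforms g) -> List.In c SL) by exact Hcl.
  induction g; simpl; intros Htf Hin k.
  - tauto.
  - unfold Vpk; tauto.
  - assert (Hs : List.In s (spl SL)) by (apply (spl_in SL (FPrec s s')); simpl; auto).
    assert (Hs' : List.In s' (spl SL)) by (apply (spl_in SL (FPrec s s')); simpl; auto).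
    assert (Hwi : List.In (wprec M s s') (witl M i SL)) by (apply (witl_in M i SL (FPrec s s')); simpl; auto).
    destruct (wprec_spec M s s' (lam_ne M s Hw)) as [Hl Hor].
    split.
    + intros H t Ht. destruct Hor as [Hn|Hall]; [|auto]. exfalso.
      destruct (trk_idx σ _ _ Hwi) as [k0 Hk0].
      specialize (H k0). apply Hn. rewrite <- Hk0. apply (proj1 (VsE s' k0 Hs')). apply H.
      apply (proj2 (VsE s k0 Hs)). rewrite Hk0. exact Hl.
    + intros H y Hy. apply (proj2 (VsE s' y Hs')). apply H. apply (proj1 (VsE s y Hs)). exact Hy.
  - assert (Hg : List.In g SL) by (apply (Hsub _ g Hin); simpl; right; apply sub_refl).
    specialize (IHg Htf Hg k). tauto.
  - destruct Htf as [Ht1 Ht2].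
    assert (Hg1 : List.In g1 SL) by (apply (Hsub _ g1 Hin); simpl; right; apply In_cat; left; apply sub_refl).
    assert (Hg2 : List.In g2 SL) by (apply (Hsub _ g2 Hin); simpl; right; apply In_cat; right; apply sub_refl).
    specialize (IHg1 Ht1 Hg1 k). specialize (IHg2 Ht2 Hg2 k). tauto.
  - assert (Hg : List.In g SL) by (apply (Hsub _ g Hin); simpl; right; apply sub_refl).
    assert (Hs : List.In s (spl SL)) by (apply (spl_in SL (FDia s g)); simpl; auto).
    assert (Hwi : List.In (wdia M i s g) (witl M i SL)) by (apply (witl_in M i SL (FDia s g)); simpl; auto).
    destruct (wdia_spec M i s g (lam_ne M s Hw)) as [Hl Hor].
    split.
    + intros [y [Hy Hp]]. exists (trk σ (witl M i SL) y). split.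
      * apply (proj1 (VsE s y Hs)); exact Hy.
      * apply (proj1 (IHg Htf Hg y)); exact Hp.
    + intros Hex. destruct Hor as [Hsat|Hn]; [|contradiction].
      destruct (trk_idx σ _ _ Hwi) as [k0 Hk0]. exists k0. split.
      * apply (proj2 (VsE s k0 Hs)). rewrite Hk0. exact Hl.
      * apply (proj2 (IHg Htf Hg k0)). rewrite Hk0. exact Hsat.
  - assert (Hg : List.In g SL) by (apply (Hsub _ g Hin); simpl; right; apply sub_refl).
    assert (Hs : List.In s (spl SL)) by (apply (spl_in SL (FBox s g)); simpl; auto).
    assert (Hwi : List.In (wbox M i s g) (witl M i SL)) by (apply (witl_in M i SL (FBox s g)); simpl; auto).
    destruct (wbox_spec M i s g (lam_ne M s Hw)) as [Hl Hor].
    split.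
    + intros H. destruct Hor as [Hn|Hall]; [|exact Hall]. exfalso.
      destruct (trk_idx σ _ _ Hwi) as [k0 Hk0]. apply Hn. rewrite <- Hk0.
      apply (proj1 (IHg Htf Hg k0)). apply H. apply (proj2 (VsE s k0 Hs)). rewrite Hk0. exact Hl.
    + intros H y Hy. apply (proj2 (IHg Htf Hg y)). apply H. apply (proj1 (VsE s y Hs)). exact Hy.
  - contradiction.
  - contradiction.
Qed.

Fixpoint allsubs (l : seq form) : seq form :=
  match l with [::] => [::] | g :: r => subforms g ++ allsubs r end.

Lemma allsubs_in l c : List.In c (allsubs l) <-> exists g, List.In g l /\ List.In c (subforms g).
Proof.
  induction l as [|a l IH]; simpl.
  - split; [tauto| intros [g [[] _]]].
  - rewrite In_cat IH. split.
    + intros [H|[g [H1 H2]]]; [exists a; auto | exists g; auto].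
    + intros [g [[-> | H1] H2]]; [left; auto| right; exists g; auto].
Qed.

Definition BL (f : form) : seq form := FTop :: FBot :: subforms f ++ map FNext (subforms f).
Definition SLf (f : form) : seq form := allsubs (map (fun h => FNeg (nnorm h)) (BL f)).

Lemma SLf_closed f g c : List.In g (SLf f) -> List.In c (subforms g) -> List.In c (SLf f).
Proof.
  unfold SLf; rewrite !allsubs_in. intros [h [H1 H2]] H3. exists h; split; auto. eapply sub_trans; eauto.
Qed.

Lemma in_cl_SLf f g : in_cl f g -> List.In g (SLf f).
Proof.
  intros [h [Hb Hg]].
  assert (HB : List.In h (BL f)).
  { unfold BL. destruct Hb as [Hb|[-> | [-> | [a [b [Hab ->]]]]]]; simpl; auto.
    right; right; apply In_cat; left; auto.
    right; right; apply In_cat; right; apply In_map'; auto. }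
  unfold SLf; apply allsubs_in. exists (FNeg (nnorm h)); split.
  - apply (In_map' (fun h => FNeg (nnorm h))); auto.
  - destruct Hg as [-> | ->]; [simpl; right; apply sub_refl| apply negn_sub].
Qed.

Lemma sc_rho M σ i f : wf_model M -> Pi M σ ->
  standpoint_consistent (fun g => in_cl f g /\ sat M σ i g).
Proof.
  intros Hw HP.
  exists (ordinal (size (witl M i (SLf f))).+1).
  exists (Vsk M σ (witl M i (SLf f)) (spl (SLf f))), (Vpk i σ (witl M i (SLf f))), ord0.
  split.
  - split.
    + intros s. destruct (classic (List.In s (spl (SLf f)))) as [Hs|Hs].
      * destruct (spl_wit M i _ s Hw Hs) as [t [H1 H2]].
        destruct (trk_idx σ _ _ H1) as [k Hk]. exists k. left. rewrite Hk. exact H2.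
      * exists ord0. right. exact Hs.
    + intros y. left. destruct Hw as [A [B [C D]]]. apply D. apply trk_Pi; auto. split; auto.
  - intros g [Hcl Hs] Htf.
    apply (proj2 (psl_equiv M σ i (SLf f) Hw (SLf_closed f) g Htf (in_cl_SLf f g Hcl) ord0)).
    exact Hs.
Qed.

Lemma sel_rho M σ i f : wf_model M -> Pi M σ ->
  s_elementary f (fun g => in_cl f g /\ sat M σ i g).
Proof.
  intros Hw HP. split; [|apply sc_rho; auto].
  split; [intros g [H _]; exact H|].
  split; [split; [apply in_cl_top| simpl; auto]|].
  split; [intros [_ H]; apply H; exact I|].
  split.
  { intros g Hg. pose proof (in_cl_negn f g Hg). pose proof (sat_negn M σ i g).
    destruct (classic (sat M σ i g)); tauto. }
  split.
  { intros a b Hab.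
    assert (Ha : in_cl f a) by (apply (CL f (FAnd a b)); auto; simpl; right; apply In_cat; left; apply sub_refl).
    assert (Hb : in_cl f b) by (apply (CL f (FAnd a b)); auto; simpl; right; apply In_cat; right; apply sub_refl).
    simpl; tauto. }
  intros a b Hab.
  assert (Ha : in_cl f a) by (apply (CL f (FUntil a b)); auto; simpl; right; apply In_cat; left; apply sub_refl).
  assert (Hb : in_cl f b) by (apply (CL f (FUntil a b)); auto; simpl; right; apply In_cat; right; apply sub_refl).
  pose proof (in_cl_next_until f a b Hab). pose proof (sat_until M σ i a b). tauto.
Qed.

Lemma in_In (l : seq nat) p : p \in l -> List.In p l.
Proof.
  induction l as [|a l IH]; simpl; [by []|]. rewrite in_cons => /orP [/eqP ->|H]; auto.
Qed.
Lemma In_in (l : seq nat) p : List.In p l -> p \in l.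
Proof.
  induction l as [|a l IH]; simpl; [tauto|]. intros [->|H]; rewrite in_cons; apply/orP; [left|right]; auto.
Qed.

Theorem lemma4 (phi : form) (d : nat * nat -> bool) (fresh : nat -> nat -> nat) :
  no_top phi ->
  ltl_psl phi ->
  fresh_ok phi d fresh ->
  SLTL_satisfiable (phiD phi d fresh) ->
  aut_lang_nonempty (phiD phi d fresh).
Proof.
  intros _ _ _ [M [σ [Hw [HP Hsat]]]].
  set f := phiD phi d fresh.
  exists (fun i p => σ i p && (p \in vars f)), (fun i g => in_cl f g /\ sat M σ i g).
  split.
  { intros i p H. apply in_In. move/andP: H => [_ H]. exact H. }
  split.
  { split; [apply sel_rho; auto|]. split.
    - exists f; split; [left; apply sub_refl| left; auto].
    - apply sat_nnorm. exact Hsat. }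
  split.
  { intros i. split; [|split; [|split]].
    - intros p H. apply in_In. move/andP: H => [_ H]. exact H.
    - intros p Hp. assert (Hc : in_cl f (FVar p)).
      { exists (FVar p); split; [left; apply vars_sub; auto| left; auto]. }
      simpl. rewrite (In_in _ _ Hp) andbT. tauto.
    - apply sel_rho; auto.
    - intros g Hg. assert (Hc : in_cl f g) by (apply (CL f (FNext g)); auto; simpl; right; apply sub_refl).
      simpl. tauto. }
  intros a b Hab n.
  destruct (classic (sat M σ n (FUntil a b))) as [[j [Hj [Hb _]]]|Hn].
  - exists j; split; [exact Hj|]. right. split; [|exact Hb].
    apply (CL f (FUntil a b)); auto; simpl; right; apply In_cat; right; apply sub_refl.
  - exists n; split; [apply leqnn|]. left. intros [_ H]. auto.
Qed.
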